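(* Every abelian group of squarefree composite order is GRR-detecting.
   Context: For a group $R$ and $S\subseteq R$, the Cayley digraph $\mathrm{Cay}(R,S)$ has vertex set $R$ and an arc from $r$ to $sr$ whenever $s\in S$. It is a GRR if $S=S^{-1}$ and $\mathrm{Aut}(\mathrm{Cay}(R,S))$ equals the right regular representation $\hat R$. $\mathrm{Aut}(R)_S$ is the group of automorphisms of $R$ fixing $S$ setwise. $R$ is GRR-detecting if for every $S\subseteq R$ with $S=S^{-1}$, $\mathrm{Aut}(R)_S=1$ implies $\mathrm{Cay}(R,S)$ is a GRR. *)

(* Defs.v *)
From HB Require Import structures.
From mathcomp Require Import all_boot all_fingroup.
Set Implicit Arguments. Unset Strict Implicit. Unset Printing Implicit Defensive.
Import GroupScope.

(* The group R is the whole finite group type gT. *)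

(* Arc of Cay(R,S) from r to s*r (s in S):  x -> y  iff  y * x^-1 \in S. *)
Definition cay_arc (gT : finGroupType) (S : {set gT}) (x y : gT) : bool :=
  y * x^-1 \in S.

Definition cay_aut (gT : finGroupType) (S : {set gT}) : {set {perm gT}} :=
  [set sigma : {perm gT} |
     [forall x, forall y, cay_arc S (sigma x) (sigma y) == cay_arc S x y]].

Definition right_regular (gT : finGroupType) : {set {perm gT}} :=
  [set sigma : {perm gT} | [exists g : gT, [forall x, sigma x == x * g]]].

Definition is_GRR (gT : finGroupType) (S : {set gT}) : Prop :=
  S^-1 = S /\ cay_aut S = right_regular gT.

Definition aut_stab (gT : finGroupType) (S : {set gT}) : {set {perm gT}} :=
  [set a in Aut [set: gT] | a @: S == S].

Definition GRR_detecting (gT : finGroupType) : Prop :=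
  forall S : {set gT}, S^-1 = S -> aut_stab S = 1 -> is_GRR S.

Definition squarefree (n : nat) : bool :=
  [forall p : 'I_n.+1, prime p ==> ~~ (p * p %| n)].

Definition composite (n : nat) : bool := (1 < n) && ~~ prime n.

(* Main.v *)
Require Import Defs.
From mathcomp Require Import all_boot all_fingroup all_solvable.
Import GroupScope.

Lemma noninv (gT : finGroupType) :
  squarefree #|gT| -> composite #|gT| -> exists x : gT, x^-1 != x.
Proof.
move=> Hsq /andP[Hn1 Hnp].
case: (boolP [exists x : gT, x^-1 != x]) => [/existsP//|/existsPn H].
have two : forall p, prime p -> p %| #|gT| -> p = 2.
  move=> p pp pd.
  have pd' : p %| #|[set: gT]| by rewrite cardsT.
  have [x _ ox] := Cauchy pp pd'.
  have : #[x] %| 2.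
    rewrite order_dvdn expgS expg1.
    by move/negbNE/eqP: (H x) => {2}<-; rewrite mulgV.
  rewrite ox dvdn_prime2 //; first by move/eqP.
set n := #|gT| in Hsq Hn1 Hnp two *.
have pp := pdiv_prime Hn1.
set m := (n %/ pdiv n)%N.
have nE : n = (pdiv n * m)%N by rewrite /m mulnC divnK // pdiv_dvd.
have m1 : (1 < m)%N.
  case: m nE => [|[|k]] // nE; first by move: Hn1; rewrite nE muln0.
  by move: Hnp; rewrite nE muln1 pp.
have qp := pdiv_prime m1.
have p2 := two _ pp (pdiv_dvd n).
have mn : (m %| n)%N by rewrite nE dvdn_mull.
have q2 := two _ qp (dvdn_trans (pdiv_dvd m) mn).
have d4 : (2 * 2 %| n)%N by rewrite nE p2 dvdn_pmul2l // -q2 pdiv_dvd.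
have l2 : (2 < n.+1)%N := Hn1.
by move/forallP: Hsq => /(_ (Ordinal l2)) /=; rewrite d4.
Qed.

Theorem proposition4p3 (gT : finGroupType) :
  abelian [set: gT] -> squarefree #|gT| -> composite #|gT| -> GRR_detecting gT.
Proof.
move=> Hab Hsq Hc S HS Hstab; exfalso.
have [x Hx] := @noninv gT Hsq Hc.
pose a := perm (@invg_inj gT).
have aAut : a \in Aut [set: gT].
  rewrite inE; apply/andP; split; first by apply/subsetP => ? _; rewrite inE.
  apply/morphicP => y z _ _; rewrite !permE invMg.
  by apply: (centsP Hab); rewrite inE.
have memS : forall y, (y^-1 \in S) = (y \in S).
  by move=> y; rewrite -[in RHS]HS inE.
have aS : a @: S == S.
  apply/eqP/setP => y; apply/imsetP/idP => [[z zS ->]|yS].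
    by rewrite permE memS.
  by exists y^-1; rewrite ?memS ?permE ?invgK.
have : a \in aut_stab S by rewrite inE aAut aS.
rewrite Hstab => /set1P a1.
have : a x = x by rewrite a1 perm1.
by rewrite permE => ax; move: Hx; rewrite ax eqxx.
Qed.
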